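(* Let $(\Omega,\mathcal F)$ be a measurable space and $\mathcal P$ a σ-convex family of probability measures on $\mathcal F$. The following are equivalent: (1) $\mathcal P$ has the class (S) property and, for a $\mathcal P$-q.s. disjointly supported alternative $\mathcal R$ of $\mathcal P$ with supports $\{S_Q\}_{Q\in\mathcal R}$, every $P\in\mathcal P$ satisfies $P\big(\bigcup_{Q\in\mathcal R(P)}S_Q\big)=1$; (2) $\mathcal P$ is pre-Hahn-localizable.
   Context: A set is $\mathcal P$-polar if contained in some $N\in\mathcal F$ with $P(N)=0$ for all $P\in\mathcal P$. A measure $\mu$ on $\mathcal F$ is supported with support $S\in\mathcal F$ if $\mu(\Omega\setminus S)=0$ and, whenever $N\in\mathcal F$ with $\mu(N\cap S)=0$, $N\cap S$ is $\mathcal P$-polar. $\mathcal P$ has the class (S) property if there is a family $\mathcal R$ of supported probability measures on $\mathcal F$ (a supported alternative) with the same null sets as $\mathcal P$; it is $\mathcal P$-q.s. disjointly supported if $S_Q\cap S_R$ is $\mathcal P$-polar for $Q\neq R$ in $\mathcal R$. $\mathcal R(P)=\{Q\in\mathcal R:P(S_Q)>0\}$. $\mathcal A\lll\mathcal B$ means every $A\in\mathcal A$ is absolutely continuous w.r.t. some $B\in\mathcal B$; $\mathrm{sconv}$ denotes countable convex combinations; σ-convex means closed under countable convex combinations. $\mathcal P$ is pre-Hahn-localizable if there are a family $\mathcal Q$ of probability measures on $\mathcal F$ and sets $S_Q\in\mathcal F$ with $Q(S_R)=\delta_{QR}$ for $Q,R\in\mathcal Q$ and $\mathcal Q\lll\mathcal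 P\lll\mathrm{sconv}(\mathcal Q)$. *)

(* Defs.v *)
From HB Require Import structures.
From mathcomp Require Import all_boot all_order all_algebra.
From mathcomp Require Import all_classical all_reals all_analysis.
Set Implicit Arguments. Unset Strict Implicit. Unset Printing Implicit Defensive.
Import Order.TTheory GRing.Theory Num.Theory.
Local Open Scope classical_set_scope.
Local Open Scope ring_scope.

Section Defs.
Context {d : measure_display} {T : measurableType d} {R : realType}.
Local Notation prob := (probability T R).

Definition polar (Ps : set prob) (A : set T) : Prop :=
  exists N, [/\ measurable N, A `<=` N & forall P, Ps P -> P N = 0%E].

Definition supported_with (Ps : set prob) (mu : prob) (S : set T) : Prop :=
  [/\ measurable S, mu (~` S) = 0%E &
      forall N, measurable N -> mu (N `&` S) = 0%E -> polar Ps (N `&` S)].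

Definition same_null_sets (Ps Rs : set prob) : Prop :=
  forall N, measurable N ->
    ((forall P, Ps P -> P N = 0%E) <-> (forall Q, Rs Q -> Q N = 0%E)).

Definition supported_alternative (Ps Rs : set prob) (S : prob -> set T) : Prop :=
  (forall Q, Rs Q -> supported_with Ps Q (S Q)) /\ same_null_sets Ps Rs.

Definition class_S (Ps : set prob) : Prop :=
  exists Rs S, supported_alternative Ps Rs S.

Definition qs_disjointly_supported (Ps Rs : set prob) (S : prob -> set T) : Prop :=
  forall Q Q', Rs Q -> Rs Q' -> Q <> Q' -> polar Ps (S Q `&` S Q').

Definition RP (Rs : set prob) (S : prob -> set T) (P : prob) : set prob :=
  [set Q | Rs Q /\ (0 < P (S Q))%E].

(* mu (a set function on T) is a countable convex combination of elements
   of Qs, i.e. mu belongs to sconv(Qs) (equality checked on F). *)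
Definition in_sconv (Qs : set prob) (mu : set T -> \bar R) : Prop :=
  exists (q : nat -> prob) (l : nat -> R),
    [/\ forall n, Qs (q n), forall n, 0 <= l n,
        (\sum_(0 <= n <oo) (l n)%:E)%E = 1%E &
        forall A, measurable A -> mu A = (\sum_(0 <= n <oo) (l n)%:E * q n A)%E].

Definition sigma_convex (Ps : set prob) : Prop :=
  forall mu, in_sconv Ps mu ->
    exists P, Ps P /\ forall A, measurable A -> P A = mu A.

Definition abs_cont (mu nu : set T -> \bar R) : Prop :=
  forall A, measurable A -> nu A = 0%E -> mu A = 0%E.

Definition lll (As Bs : set prob) : Prop :=
  forall A, As A -> exists B, Bs B /\ abs_cont A B.

Definition lll_sconv (Ps Qs : set prob) : Prop :=
  forall P, Ps P -> exists mu, in_sconv Qs mu /\ abs_cont P mu.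

Definition pre_Hahn_localizable (Ps : set prob) : Prop :=
  exists (Qs : set prob) (S : prob -> set T),
    [/\ forall Q, Qs Q -> measurable (S Q),
        forall Q Q', Qs Q -> Qs Q' ->
          Q (S Q') = (if pselect (Q = Q') then 1 else 0)%E,
        lll Qs Ps & lll_sconv Ps Qs].

End Defs.

(* Main.v *)
Require Import Defs.
From mathcomp Require Import all_boot all_order all_algebra.
From mathcomp Require Import all_classical all_reals all_analysis.
Set Implicit Arguments. Unset Strict Implicit. Unset Printing Implicit Defensive.
Import Order.TTheory GRing.Theory Num.Theory.
Local Open Scope classical_set_scope.
Local Open Scope ring_scope.

Section H.
Context {d : measure_display} {T : measurableType d} {R : realType}.
Local Notation prob := (probability T R).

Lemma series_term0 (q : nat -> prob) (l : nat -> R) (A : set T) :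
  (forall n, 0 <= l n) ->
  (\sum_(0 <= n <oo) (l n)%:E * q n A)%E = 0%E ->
  forall n, 0 < l n -> q n A = 0%E.
Proof.
move=> l0 H n ln.
have ge0 : forall k, (0 <= (l k)%:E * q k A)%E.
  by move=> k; apply: mule_ge0; [rewrite lee_fin|exact: measure_ge0].
have : ((l n)%:E * q n A <= 0)%E.
  rewrite -H; apply: le_trans (nneseries_lim_ge n.+1 (fun k _ _ => ge0 k)).
  rewrite big_nat_recr //=; apply: leeDr. 
  by apply: sume_ge0 => k _; exact: ge0.
move=> le0; have /eqP: ((l n)%:E * q n A = 0)%E by apply/le_anti; rewrite le0 ge0.
by rewrite mule_eq0 eqe (gt_eqF ln) /= => /eqP.
Qed.

Lemma series_zero (q : nat -> prob) (l : nat -> R) (A : set T) :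
  (forall n, l n = 0 \/ q n A = 0%E) ->
  (\sum_(0 <= n <oo) (l n)%:E * q n A)%E = 0%E.
Proof.
move=> H; apply: eseries0 => n _ _; case: (H n) => ->; by rewrite ?mule0 ?mul0e.
Qed.

Definition half_l (n : nat) : R := 1 / (2 ^ (n + 1))%:R.

Lemma half_l_gt0 n : 0 < half_l n.
Proof. by rewrite /half_l divr_gt0 // ltr0n expn_gt0. Qed.

Lemma half_l_sum : (\sum_(0 <= n <oo) (half_l n)%:E)%E = 1%E.
Proof.
have := @cvg_geometric_eseries_half R 1 0.
rewrite expr0 divr1 => /cvg_lim <- //.
Qed.


Lemma prob_fin (P : prob) A : measurable A -> P A \is a fin_num.
Proof. move=> mA; exact: fin_num_measure. Qed.

Lemma sconv_seq (Ps : set prob) (P_ : nat -> prob) :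
  sigma_convex Ps -> (forall n, Ps (P_ n)) ->
  exists P, Ps P /\ forall A, measurable A -> P A = 0%E -> forall n, P_ n A = 0%E.
Proof.
move=> sc HP.
have [P [PsP PE]] : exists P, Ps P /\ forall A, measurable A ->
    P A = (\sum_(0 <= n <oo) (half_l n)%:E * P_ n A)%E.
  apply: sc; exists P_, half_l; split => //.
  - by move=> n; exact/ltW/half_l_gt0.
  - exact: half_l_sum.
exists P; split => // A mA PA0 n.
apply: (@series_term0 P_ half_l A) => //.
- by move=> k; exact/ltW/half_l_gt0.
- by rewrite -PE.
- exact: half_l_gt0.
Qed.

Lemma exhaust (mu : prob) (F : set (set T)) :
  (forall A, F A -> measurable A) -> (exists A, F A) ->
  (forall A : nat -> set T, (forall n, F (A n)) -> F (\bigcup_n A n)) ->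
  exists B, F B /\ forall A, F A -> mu (A `\` B) = 0%E.
Proof.
move=> Fm [A0 FA0] Fcup.
set S := [set mu A | A in F].
set s := ereal_sup S.
have s_fin : s \is a fin_num.
  rewrite ge0_fin_numE.
    apply: (@le_lt_trans _ _ 1%E); last exact: ltry.
    apply: ge_ereal_sup => _ [A FA <-]; exact: probability_le1 (Fm _ FA).
  apply: le_trans (measure_ge0 mu A0) _.
  by apply: ereal_sup_ubound; exists A0.
have adh : forall n : nat, exists A, F A /\ (s - (n.+1%:R^-1)%:E < mu A)%E.
  move=> n; have [_ [A FA <-] h] := @ub_ereal_sup_adherent _ S (n.+1%:R^-1) ltac:(by rewrite invr_gt0 ltr0Sn) s_fin.
  by exists A.
have [A_ HA] := choice adh.
set B := \bigcup_n A_ n.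
have FB : F B by apply: Fcup => n; case: (HA n).
have mB := Fm _ FB.
have sB : (s <= mu B)%E.
  apply/lee_addgt0Pr => e e0.
  have [N _ HN] := near_infty_natSinv_lt (PosNum e0).
  have eN := HN N (leqnn N).
  case: (HA N) => FAN.
  rewrite lteBlDr // => lt.
  apply: (le_trans (ltW lt)); apply: leeD.
    apply: le_measure; rewrite ?inE; [exact: Fm|exact: mB|].
    by move=> x Ax; exists N.
  by rewrite lee_fin; exact: ltW.
exists B; split => // A FA.
have mA := Fm _ FA.
have FAB : F (A `|` B).
  have -> : A `|` B = \bigcup_n (if n is 0 then A else B).
    apply/seteqP; split => x.
      by case=> h; [exists 0|exists 1].
    by case=> -[|n] _ h; [left|right].
  by apply: Fcup => -[|n].
have le1 : (mu (A `|` B) <= s)%E by apply: ereal_sup_ubound; exists (A `|` B).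
have eqU : A `|` B = B `|` (A `\` B).
  apply/seteqP; split => x /=.
    by case: (pselect (B x)) => bx; [left|right; case: H].
  by case=> [bx|[]]; [right|left].
have mAB : measurable (A `\` B) by exact: measurableD.
rewrite eqU measureU // ?setDIK // in le1.
apply/le_anti; rewrite measure_ge0 andbT.
have := le_trans le1 sB.
rewrite -[X in (_ <= X)%E]adde0 leeD2lE //; exact: prob_fin.
Qed.


Lemma sub0 (mu : prob) A B : measurable A -> measurable B -> A `<=` B ->
  mu B = 0%E -> mu A = 0%E.
Proof.
move=> mA mB AB h; apply/le_anti; rewrite measure_ge0 andbT -h.
by apply: le_measure; rewrite ?inE.
Qed.

Lemma setC0_of1 (Q : prob) A : measurable A -> Q A = 1%E -> Q (~` A) = 0%E.
Proof. by move=> mA h; rewrite probability_setC // h subee. Qed.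

Lemma of_setC0 (P : prob) A : measurable A -> P (~` A) = 0%E -> P A = 1%E.
Proof.
move=> mA h.
have := probability_setC P mA; rewrite h => /esym H.
have fA : P A \is a fin_num by exact: prob_fin.
by rewrite -[RHS](@subeK _ _ (P A) fA) H add0e.
Qed.

Lemma hahn_to_S (Ps : set prob) : pre_Hahn_localizable Ps ->
  (class_S Ps /\
    exists (Rs : set prob) (S : prob -> set T),
      [/\ supported_alternative Ps Rs S, qs_disjointly_supported Ps Rs S &
          forall P, Ps P ->
            measurable (\bigcup_(Q in RP Rs S P) S Q) /\
            P (\bigcup_(Q in RP Rs S P) S Q) = 1%E]).
Proof.
move=> [Qs [S [mS delta QsP PsQ]]].
have QS1 : forall Q, Qs Q -> Q (S Q) = 1%E.
  by move=> Q h; rewrite (delta _ _ h h); case: pselect.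
have QS0 : forall Q Q', Qs Q -> Qs Q' -> Q <> Q' -> Q (S Q') = 0%E.
  by move=> Q Q' h h' ne; rewrite (delta _ _ h h'); case: pselect.
have nullP : forall P A, Ps P -> measurable A -> (forall Q, Qs Q -> Q A = 0%E) -> P A = 0%E.
  move=> P A PsP mA H.
  have [mu [[q [l [qQ l0 l1 muE]]] abs]] := PsQ P PsP.
  apply: abs => //; rewrite muE //; apply: series_zero => n; right; exact: H.
have sa : supported_alternative Ps Qs S.
  split.
    move=> Q h; split; first exact: mS.
      by apply: setC0_of1; [exact: mS|exact: QS1].
    move=> N mN h0; exists (N `&` S Q); split => //.
      by apply: measurableI => //; exact: mS.
    move=> P PsP; apply: nullP => //; first by apply: measurableI => //; exact: mS.
    move=> Q' h'; case: (pselect (Q' = Q)) => [->//|ne].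
    apply: (sub0 (B := S Q)); [by apply: measurableI => //; exact: mS|exact: mS| |].
      by move=> x [].
    exact: QS0.
  move=> N mN; split.
    move=> H Q h; have [P [PsP abs]] := QsP Q h; apply: abs => //; exact: H.
  by move=> H P PsP; apply: nullP.
split; first by exists Qs, S.
exists Qs, S; split => //.
  move=> Q Q' h h' ne; exists (S Q `&` S Q'); split => //.
    by apply: measurableI; exact: mS.
  move=> P PsP; apply: nullP => //; first by apply: measurableI; exact: mS.
  move=> Q'' h''; case: (pselect (Q'' = Q)) => [->|ne'].
    apply: (sub0 (B := S Q')); [by apply: measurableI; exact: mS|exact: mS| |].
      by move=> x [].
    exact: QS0.
  apply: (sub0 (B := S Q)); [by apply: measurableI; exact: mS|exact: mS| |].
    by move=> x [].
  exact: QS0.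
move=> P PsP.
have [mu [[q [l [qQ l0 l1 muE]]] abs]] := PsQ P PsP.
have Ueq : \bigcup_(Q in RP Qs S P) S Q =
    \bigcup_(n in [set n | RP Qs S P (q n) /\ 0 < l n]) S (q n).
  apply/seteqP; split => x; last by move=> [n [h _] Sx]; exists (q n).
  move=> [Q]; rewrite /RP /= => -[QsQ PQ] Sx.
  case: (pselect (exists n, q n = Q /\ 0 < l n)) => [[n [qn ln]]|nex].
    exists n; last by rewrite qn.
    by rewrite /= qn; split.
  exfalso; move: PQ; rewrite abs //; first by rewrite ltxx.
    exact: mS.
  rewrite muE; last exact: mS.
  apply: series_zero => n; case: (pselect (q n = Q)) => [qn|ne].
    left; apply/eqP; rewrite eq_le l0 andbT leNgt; apply/negP => ln.
    by apply: nex; exists n.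
  by right; apply: QS0.
have mU : measurable (\bigcup_(Q in RP Qs S P) S Q).
  by rewrite Ueq; apply: bigcup_measurable => n _; exact: mS.
split => //; apply: of_setC0 => //.
set W := \bigcap_(n in [set n | 0 < l n]) ~` S (q n).
set Z := fun n => if pselect (P (S (q n)) = 0%E) then S (q n) else set0.
have nW : P.-negligible W.
  have mW : measurable W.
    by apply: bigcap_measurableType => n _; apply: measurableC; exact: mS.
  exists W; split => //; apply: abs => //; rewrite muE //.
  apply: series_zero => n; case: (pselect (0 < l n)) => ln.
    right; apply: (sub0 (B := ~` S (q n))) => //.
      by apply: measurableC; exact: mS.
      by move=> x /(_ n ln).
    by apply: setC0_of1; [exact: mS|exact: QS1].
  by left; apply/eqP; rewrite eq_le l0 andbT leNgt; apply/negP.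
have nZ : P.-negligible (\bigcup_n Z n).
  apply: negligible_bigcup => n; rewrite /Z; case: pselect => h.
    by apply/negligibleP => //; exact: mS.
  exact: negligible_set0.
apply: measure_negligible; first exact: measurableC.
apply: (negligibleS _ (negligibleU nW nZ)) => x /= nU.
case: (pselect (W x)) => Wx; first by left.
right; have [n ln Sx] : exists2 n, 0 < l n & S (q n) x.
  by apply: contrapT => nex; apply: Wx => n ln Sx; apply: nex; exists n.
exists n => //; rewrite /Z; case: pselect => // h; exfalso; apply: nU.
exists (q n) => //; split; first exact: qQ.
by rewrite lt0e measure_ge0 andbT; apply/eqP.
Qed.


Lemma HS (Ps : set prob) (Q : prob) (SQ : set T) : sigma_convex Ps ->
  measurable SQ -> Q (~` SQ) = 0%E ->
  (forall N, measurable N -> Q (N `&` SQ) = 0%E -> polar Ps (N `&` SQ)) ->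
  (forall A, polar Ps A -> Q.-negligible A) ->
  exists P, Ps P /\ abs_cont Q P.
Proof.
move=> sc mSQ QSc supp pnull.
have polQ : forall A, measurable A -> A `<=` SQ -> Q A = 0%E ->
    forall P, Ps P -> P A = 0%E.
  move=> A mA AS QA P PsP.
  have eA : A `&` SQ = A by apply/seteqP; split => [x []//|x Ax]; split => //; exact: AS.
  have := supp A mA; rewrite eA => /(_ QA) [N [mN AN PN]].
  exact: (sub0 mA mN AN (PN P PsP)).
have nonpolar : forall A, measurable A -> Q A <> 0%E -> exists P, Ps P /\ P A <> 0%E.
  move=> A mA QA; apply: contrapT => nex; apply: QA.
  apply: measure_negligible => //; apply: pnull; exists A; split => // P PsP.
  by apply: contrapT => h; apply: nex; exists P.
have QS1 : Q SQ = 1%E by exact: of_setC0.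
have [P0 [PsP0 _]] : exists P, Ps P /\ P SQ <> 0%E.
  by apply: nonpolar => //; rewrite QS1 => -[] /eqP; rewrite oner_eq0.
pose G := [set B | [/\ measurable B, B `<=` SQ & exists P, Ps P /\
   forall A, measurable A -> A `<=` B -> P A = 0%E -> Q A = 0%E]].
have Gcup : forall B_ : nat -> set T, (forall n, G (B_ n)) -> G (\bigcup_n B_ n).
  move=> B_ HB.
  have : forall n, exists P, Ps P /\
      forall A, measurable A -> A `<=` B_ n -> P A = 0%E -> Q A = 0%E.
    by move=> n; case: (HB n).
  move=> /choice [P_ HP].
  have [P [PsP PP]] := sconv_seq sc (fun n => (HP n).1).
  split.
  - by apply: bigcup_measurable => n _; case: (HB n).
  - by move=> x [n _ Bx]; case: (HB n) => _ sub _; exact: sub.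
  exists P; split => // A mA AB PA.
  apply: measure_negligible => //.
  apply: (@negligibleS _ _ _ _ (\bigcup_n (A `&` B_ n))).
    by move=> x Ax; have [n _ Bx] := AB x Ax; exists n.
  apply: negligible_bigcup => n.
  have mBn : measurable (B_ n) by case: (HB n).
  apply/negligibleP; first exact: measurableI.
  apply: (HP n).2; [exact: measurableI| by move=> x []|].
  apply: (sub0 (B := A)) => //; first exact: measurableI.
  exact: PP.
have G0 : G set0.
  split => //; exists P0; split => // A mA A0 _.
  by rewrite (_ : A = set0) ?measure0 //; apply/seteqP; split.
have [Bs [[mBs sBs [Ps_ [PsPs HPs]]] maxB]] :=
  exhaust Q (F := G) (fun A GA => let: And3 m _ _ := GA in m) (ex_intro _ _ G0) Gcup.
have mC : measurable (SQ `\` Bs) by exact: measurableD.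
have key : Q (SQ `\` Bs) = 0%E.
  apply: contrapT => hC.
  have [P' [PsP' P'C]] := nonpolar _ mC hC.
  pose H := [set E | [/\ measurable E, E `<=` SQ `\` Bs & P' E = 0%E]].
  have H0 : H set0 by split => //; exact: measure0.
  have Hcup : forall E_ : nat -> set T, (forall n, H (E_ n)) -> H (\bigcup_n E_ n).
    move=> E_ HE; split.
    - by apply: bigcup_measurable => n _; case: (HE n).
    - by move=> x [n _ Ex]; case: (HE n) => _ sub _; exact: sub.
    apply: measure_negligible; first by apply: bigcup_measurable => n _; case: (HE n).
    apply: negligible_bigcup => n; case: (HE n) => mE _ PE.
    exact/negligibleP.
  have [Es [[mEs sEs P'Es] maxE]] :=
    exhaust Q (F := H) (fun A GA => let: And3 m _ _ := GA in m) (ex_intro _ _ H0) Hcup.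
  have mD : measurable ((SQ `\` Bs) `\` Es) by exact: measurableD.
  have GD : G ((SQ `\` Bs) `\` Es).
    split => //; first by move=> x [[]].
    exists P'; split => // A mA AD P'A.
    have HA : H A by split => // x /AD [].
    have := maxE A HA; rewrite (_ : A `\` Es = A) //.
    by apply/seteqP; split => [x []//|x Ax]; split => //; case: (AD x Ax).
  have QD : Q ((SQ `\` Bs) `\` Es) = 0%E.
    have := maxB _ GD; rewrite (_ : _ `\` Bs = (SQ `\` Bs) `\` Es) //.
    by apply/seteqP; split => [x []//|x Ax]; split => //; case: Ax => -[].
  have P'D := polQ _ mD (fun x => fun h => match h with conj (conj h1 _) _ => h1 end) QD P' PsP'.
  apply: P'C; apply: measure_negligible => //.
  apply: (@negligibleS _ _ _ _ (((SQ `\` Bs) `\` Es) `|` Es)).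
    by move=> x Cx; case: (pselect (Es x)) => h; [right|left].
  by apply: negligibleU; apply/negligibleP.
exists Ps_; split => // A mA PA.
apply: measure_negligible => //.
apply: (@negligibleS _ _ _ _ ((A `&` Bs) `|` ((SQ `\` Bs) `|` ~` SQ))).
  move=> x Ax; case: (pselect (Bs x)) => hb; first by left.
  by right; case: (pselect (SQ x)) => hs; [left|right].
apply: negligibleU.
  apply/negligibleP; first exact: measurableI.
  apply: HPs; [exact: measurableI|by move=> x []|].
  apply: (sub0 (B := A)) => //; first exact: measurableI.
apply: negligibleU; apply/negligibleP => //; exact: measurableC.
Qed.


Lemma enum_part (Ps Rs : set prob) (S : prob -> set T) (P : prob) :
  (forall Q, Rs Q -> supported_with Ps Q (S Q)) ->
  qs_disjointly_supported Ps Rs S -> Ps P ->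
  measurable (\bigcup_(Q in RP Rs S P) S Q) ->
  P (\bigcup_(Q in RP Rs S P) S Q) = 1%E ->
  exists mu, in_sconv Rs mu /\ abs_cont P mu.
Proof.
move=> supp disj PsP mU PU.
have mS : forall Q, Rs Q -> measurable (S Q) by move=> Q /supp [].
have polP : forall A, polar Ps A -> P.-negligible A.
  by move=> A [N [mN AN PN]]; exists N; split => //; exact: PN.
set RPP := RP Rs S P.
have [Q0 hQ0] : exists Q0, RPP Q0.
  apply: contrapT => nex; move: PU.
  rewrite (_ : \bigcup_(Q in RP Rs S P) S Q = set0) ?measure0.
    by move=> -[] /eqP; rewrite eq_sym oner_eq0.
  by apply/seteqP; split => x // [Q h _]; apply: nex; exists Q.
pose F := [set B | exists q : nat -> prob, (forall n, RPP (q n)) /\ B = \bigcup_n S (q n)].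
have Fm : forall B, F B -> measurable B.
  move=> B [q [hq ->]]; apply: bigcup_measurable => n _; exact: mS (hq n).1.
have FQ : forall Q, RPP Q -> F (S Q).
  move=> Q hQ; exists (fun _ => Q); split => //.
  by rewrite bigcup_const //; exists 0.
have Fcup : forall B_ : nat -> set T, (forall n, F (B_ n)) -> F (\bigcup_n B_ n).
  move=> B_ /choice [q_ Hq].
  pose qq m := match (unpickle m : option (nat * nat)) with
               | Some (a, b) => q_ a b | None => q_ 0 0 end.
  exists qq; split.
    by move=> m; rewrite /qq; case: unpickle => [[a b]|]; exact: (Hq _).1.
  apply/seteqP; split => x.
    move=> [n _]; rewrite (Hq n).2 => -[m _ Sx].
    by exists (pickle (n, m)) => //; rewrite /qq pickleK.
  move=> [m _]; rewrite /qq; case: unpickle => [[a b]|] Sx.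
    by exists a => //; rewrite (Hq a).2; exists b.
  by exists 0 => //; rewrite (Hq 0).2; exists 0.
have [Bs [[qs [qsR ->]] maxB]] :=
  exhaust P (F := F) Fm (ex_intro _ _ (FQ _ hQ0)) Fcup.
have allin : forall Q, RPP Q -> exists n, qs n = Q.
  move=> Q hQ; apply: contrapT => nex.
  have h1 := maxB _ (FQ Q hQ).
  have h2 : P.-negligible (S Q `&` \bigcup_n S (qs n)).
    apply: (@negligibleS _ _ _ _ (\bigcup_n (S Q `&` S (qs n)))).
      by move=> x [Sx [n _ Sn]]; exists n.
    apply: negligible_bigcup => n; apply: polP; apply: disj.
    - exact: hQ.1.
    - exact: (qsR n).1.
    - by move=> e; apply: nex; exists n.
  have : P (S Q) = 0%E.
    apply: measure_negligible; first exact: mS hQ.1.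
    apply: (@negligibleS _ _ _ _ ((S Q `\` \bigcup_n S (qs n)) `|` (S Q `&` \bigcup_n S (qs n)))).
      by move=> x Sx; case: (pselect ((\bigcup_n S (qs n)) x)) => h; [right|left].
    apply: negligibleU => //; apply/negligibleP => //.
    apply: measurableD; first exact: mS hQ.1.
    by apply: bigcup_measurable => n _; exact: mS (qsR n).1.
  by move: hQ.2 => /[swap] ->; rewrite ltxx.
exists (fun A => \sum_(0 <= n <oo) ((half_l n)%:E * qs n A))%E; split.
  exists qs, half_l; split => //.
  - by move=> n; exact: (qsR n).1.
  - by move=> n; exact/ltW/half_l_gt0.
  - exact: half_l_sum.
move=> A mA mu0.
have qA : forall n, qs n A = 0%E.
  move=> n; apply: (series_term0 _ mu0); last exact: half_l_gt0.
  by move=> k; exact/ltW/half_l_gt0.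
apply: measure_negligible => //.
apply: (@negligibleS _ _ _ _ (~` (\bigcup_(Q in RP Rs S P) S Q) `|` \bigcup_n (A `&` S (qs n)))).
  move=> x Ax; case: (pselect ((\bigcup_(Q in RP Rs S P) S Q) x)) => hU; last by left.
  right; case: hU => Q hQ SQx; have [n qn] := allin Q hQ.
  by exists n => //; rewrite qn.
apply: negligibleU.
  apply/negligibleP; first exact: measurableC.
  exact: setC0_of1.
apply: negligible_bigcup => n.
have mSn : measurable (S (qs n)) by exact: mS (qsR n).1.
have [_ _ sp] := supp _ (qsR n).1.
apply: polP; apply: sp => //.
apply: (sub0 (B := A)) => //; first exact: measurableI.
Qed.


Lemma S_to_hahn (Ps : set prob) : sigma_convex Ps ->
  (class_S Ps /\
    exists (Rs : set prob) (S : prob -> set T),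
      [/\ supported_alternative Ps Rs S, qs_disjointly_supported Ps Rs S &
          forall P, Ps P ->
            measurable (\bigcup_(Q in RP Rs S P) S Q) /\
            P (\bigcup_(Q in RP Rs S P) S Q) = 1%E]) ->
  pre_Hahn_localizable Ps.
Proof.
move=> sc [_ [Rs [S [[supp sns] disj cover]]]].
have mS : forall Q, Rs Q -> measurable (S Q) by move=> Q /supp [].
have QSc : forall Q, Rs Q -> Q (~` S Q) = 0%E by move=> Q /supp [].
have pnull : forall Q A, Rs Q -> polar Ps A -> Q.-negligible A.
  move=> Q A h [N [mN AN PN]]; exists N; split => //.
  exact: (proj1 (sns N mN) PN Q h).
exists Rs, S; split => //.
- move=> Q Q' h h'; case: pselect => [e|ne] /=.
    by rewrite -e; exact: of_setC0 (mS _ h) (QSc _ h).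
  apply: measure_negligible; first exact: mS.
  apply: (@negligibleS _ _ _ _ ((S Q `&` S Q') `|` ~` S Q)).
    by move=> x Sx; case: (pselect (S Q x)) => hx; [left|right].
  apply: negligibleU; first exact: (pnull Q _ h (disj _ _ h h' ne)).
  by apply/negligibleP; [apply: measurableC; exact: mS | exact: QSc].
- move=> Q h; have [mSQ QS sp] := supp Q h.
  by apply: (HS sc mSQ QS sp) => A; exact: pnull Q A h.
- move=> P PsP; have [mU PU] := cover P PsP.
  exact: enum_part supp disj PsP mU PU.
Qed.

End H.

Unset Implicit Arguments.

Theorem lemma3p10 (d : measure_display) (T : measurableType d) (R : realType)
  (Ps : set (probability T R)) :
  sigma_convex Ps ->
  ((class_S Ps /\
    exists (Rs : set (probability T R)) (S : probability T R -> set T),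
      [/\ supported_alternative Ps Rs S, qs_disjointly_supported Ps Rs S &
          forall P, Ps P ->
            measurable (\bigcup_(Q in RP Rs S P) S Q) /\
            P (\bigcup_(Q in RP Rs S P) S Q) = 1%E])
   <-> pre_Hahn_localizable Ps).
Proof.
move=> sc; split; first exact: S_to_hahn.
exact: hahn_to_S.
Qed.
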